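(* Let $K$ be a $p$-adic field and fix either the semi-algebraic or the subanalytic structure on $K$; ''definable'' refers to this structure. Let $X\subset K^r$ be a definable set, let $\lambda>0$, and let $f:X\to K$ be a definable $\lambda$-Lipschitz function. Let $X=\bigcup_{i=1}^k X_i$ be a finite covering of $X$ by definable subsets $X_i$, and put $f_i=f|_{X_i}$. Suppose that for each $i$, $f_i$ extends to a definable $\Lambda_i$-Lipschitz map $\tilde f_i:K^r\to K$, where $\Lambda_i\ge\lambda$. Then $f$ extends to a definable $\Lambda$-Lipschitz map $\tilde f:K^r\to K$, where $\Lambda=\max_i\Lambda_i$.
   Context: $K$ is a finite field extension of $\mathbb{Q}_p$, with valuation $\mathrm{ord}$, residue field of cardinality $q$, and norm $|x|=q^{-\mathrm{ord}(x)}$ (with $|0|=0$); $K^n$ carries the max-norm $|(x_1,\dots,x_n)|=\max_i|x_i|$. Definable means definable (with parameters) in the semi-algebraic structure (the field language on $K$) or in the subanalytic structure (the field language expanded by restricted analytic functions, i.e. functions on $\mathcal{O}_K^n$ given by convergent power series, extended by zero outside $\mathcal{O}_K^n$). A function $g:A\to K^s$ with $A\subset K^n$ is $\lambda$-Lipschitz if $|g(a)-g(b)|\le\lambda|a-b|$ for all $a,b\in A$. *)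

(* Defs.v *)
From HB Require Import structures.
From mathcomp Require Import all_boot all_order all_algebra.
From mathcomp Require Import reals.
Set Implicit Arguments. Unset Strict Implicit. Unset Printing Implicit Defensive.
Import Order.TTheory GRing.Theory Num.Theory.
Local Open Scope ring_scope.

Section PAdic.
Variable K : fieldType.
Variable ord : K -> int.

(* "ord x >= N", with the convention ord 0 = +oo *)
Definition valge (x : K) (N : int) : Prop := x = 0 \/ N <= ord x.

Definition val_cauchy (u : nat -> K) : Prop :=
  forall M : int, exists N, forall m n, (N <= m)%N -> (N <= n)%N ->
    valge (u m - u n) M.

Definition val_converges (u : nat -> K) (L : K) : Prop :=
  forall M : int, exists N, forall n, (N <= n)%N -> valge (u n - L) M.

(* K is a p-adic field (finite extension of Q_p) with normalized discrete
   valuation ord and residue field of cardinality q: a complete discretely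
   valued field of characteristic 0, whose valuation is positive on p, with
   finite residue field of q elements. *)
Record padic_field (p q : nat) : Prop := {
  pf_prime : prime p;
  pf_char0 : forall n : nat, (0 < n)%N -> n%:R != 0 :> K;
  pf_mul : forall x y, x != 0 -> y != 0 -> ord (x * y) = ord x + ord y;
  pf_add : forall x y, x != 0 -> y != 0 -> x + y != 0 ->
             Num.min (ord x) (ord y) <= ord (x + y);
  pf_unif : exists pi : K, pi != 0 /\ ord pi = 1;
  pf_p : valge p%:R 1;
  pf_residue : exists s : seq K, [/\ size s = q,
     forall i, (i < q)%N -> valge (nth 0 s i) 0,
     forall i j, (i < q)%N -> (j < q)%N -> i != j ->
        ~ valge (nth 0 s i - nth 0 s j) 1 &
     forall x, valge x 0 -> exists2 i, (i < q)%N & valge (x - nth 0 s i) 1];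
  pf_complete : forall u, val_cauchy u -> exists L, val_converges u L
}.

(* restricted analytic functions: given on O_K^n by a power series with
   coefficients in K tending to 0, and extended by zero outside O_K^n *)
Definition psum n (c : ('I_n -> nat) -> K) (x : 'I_n -> K) (N : nat) : K :=
  \sum_(m : {ffun 'I_n -> 'I_N.+1} | (\sum_i (m i : nat) <= N)%N)
     c (fun i => (m i : nat)) * \prod_i x i ^+ m i.

Definition restricted_analytic n (F : ('I_n -> K) -> K) : Prop :=
  exists c : ('I_n -> nat) -> K,
   [/\ forall M : int, exists D, forall m : 'I_n -> nat,
          (D <= \sum_i m i)%N -> valge (c m) M,
       forall x, (forall i, valge (x i) 0) -> val_converges (psum c x) (F x) &
       forall x, ~ (forall i, valge (x i) 0) -> F x = 0].

Inductive term : Type :=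
| TVar of nat
| TConst of K
| TAdd of term & term
| TMul of term & term
| TFn (n : nat) (F : ('I_n -> K) -> K) (ts : 'I_n -> term).

Inductive formula : Type :=
| FEq of term & term
| FNot of formula
| FAnd of formula & formula
| FEx of nat & formula.

Fixpoint teval (e : nat -> K) (t : term) : K :=
  match t with
  | TVar i => e i
  | TConst c => c
  | TAdd a b => teval e a + teval e b
  | TMul a b => teval e a * teval e b
  | TFn n F ts => F (fun i => teval e (ts i))
  end.

Definition upd (e : nat -> K) (i : nat) (y : K) : nat -> K :=
  fun j => if j == i then y else e j.

Fixpoint holds (e : nat -> K) (phi : formula) : Prop :=
  match phi with
  | FEq a b => teval e a = teval e b
  | FNot f => ~ holds e f
  | FAnd f g => holds e f /\ holds e g
  | FEx i f => exists y : K, holds (upd e i y) f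
  end.

(* which function symbols are allowed: an = false : semi-algebraic structure
   (pure field language), an = true : subanalytic structure *)
Definition allowed (an : bool) n (F : ('I_n -> K) -> K) : Prop :=
  an = true /\ restricted_analytic F.

Fixpoint tadm (an : bool) (t : term) : Prop :=
  match t with
  | TVar _ | TConst _ => True
  | TAdd a b | TMul a b => tadm an a /\ tadm an b
  | TFn n F ts => allowed an F /\ forall i, tadm an (ts i)
  end.

Fixpoint fadm (an : bool) (phi : formula) : Prop :=
  match phi with
  | FEq a b => tadm an a /\ tadm an b
  | FNot f => fadm an f
  | FAnd f g => fadm an f /\ fadm an g
  | FEx _ f => fadm an f
  end.

Definition env_of r (x : 'rV[K]_r) : nat -> K :=
  fun i => oapp (fun j : 'I_r => x ord0 j) 0 (insub i).

Definition definable_set (an : bool) r (A : 'rV[K]_r -> Prop) : Prop :=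
  exists phi, fadm an phi /\ forall x, A x <-> holds (env_of x) phi.

(* f restricted to A is definable: its graph {(x, f x) | x in A} in K^(r+1)
   (last coordinate = variable r) is definable *)
Definition definable_fun (an : bool) r (A : 'rV[K]_r -> Prop)
    (f : 'rV[K]_r -> K) : Prop :=
  exists phi, fadm an phi /\
    forall x y, (A x /\ y = f x) <-> holds (upd (env_of x) r y) phi.

Variable R : realType.
Variable q : nat.

Definition absK (x : K) : R := if x == 0 then 0 else (q%:R : R) ^ (- ord x).

Definition normv r (x : 'rV[K]_r) : R := \big[Num.max/0]_(i < r) absK (x ord0 i).

Definition lipschitz_on r (A : 'rV[K]_r -> Prop) (f : 'rV[K]_r -> K) (l : R) :=
  forall a b, A a -> A b -> absK (f a - f b) <= l * normv (a - b).

End PAdic.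

(* Main.v *)
Require Import Defs.
From HB Require Import structures.
From mathcomp Require Import all_boot all_order all_algebra.
From mathcomp Require Import reals.
From mathcomp Require Import ring lra zify.
From Stdlib Require Import Classical FunctionalExtensionality ClassicalEpsilon.
Import Order.TTheory GRing.Theory Num.Theory.
Local Open Scope ring_scope.
Set Implicit Arguments. Unset Strict Implicit. Unset Printing Implicit Defensive.
Lemma valge0 (K : fieldType) (ord : K -> int) N : valge ord 0 N.
Proof. by left. Qed.

Lemma valgeW (K : fieldType) (ord : K -> int) x N M : (M <= N)%R -> valge ord x N -> valge ord x M.
Proof. move=> hMN [->|h]; [by left|right; exact: le_trans h]. Qed.

Lemma ordone (K : fieldType) (ord : K -> int) p q : padic_field ord p q -> ord 1 = 0.
Proof.
move=> HK; have := pf_mul HK (oner_neq0 K) (oner_neq0 K); rewrite mulr1.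
by move=> h; apply/eqP; rewrite -(subrr (ord 1)) {2}h addrK.
Qed.

Lemma ordN1 (K : fieldType) (ord : K -> int) p q : padic_field ord p q -> ord (-1) = 0.
Proof.
move=> HK; have n1 : (-1 : K) != 0 by rewrite oppr_eq0 oner_neq0.
have := pf_mul HK n1 n1; rewrite mulrNN mulr1 (ordone HK) => /eqP.
rewrite eq_sym -mulr2n -mulr_natr mulf_eq0 /= => /orP[/eqP//|]; by [].
Qed.

Lemma ordN (K : fieldType) (ord : K -> int) p q : padic_field ord p q -> forall x, x != 0 -> ord (- x) = ord x.
Proof.
move=> HK x hx; rewrite -mulN1r (pf_mul HK) //; last by rewrite oppr_eq0 oner_neq0.
by rewrite (ordN1 HK) add0r.
Qed.

Lemma ordX (K : fieldType) (ord : K -> int) p q : padic_field ord p q -> forall x n, x != 0 -> ord (x ^+ n) = (n%:Z * ord x)%R.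
Proof.
move=> HK x n hx; elim: n => [|n IH]; first by rewrite expr0 (ordone HK) mul0r.
rewrite exprS (pf_mul HK) // ?expf_neq0 // IH -[n.+1]addn1 PoszD mulrDl mul1r addrC.
by [].
Qed.

Lemma valgeN (K : fieldType) (ord : K -> int) p q : padic_field ord p q -> forall x N, valge ord x N -> valge ord (- x) N.
Proof.
move=> HK x N [->|h]; first by rewrite oppr0; left.
case: (eqVneq x 0) => [->|hx]; first by rewrite oppr0; left.
by right; rewrite (ordN HK).
Qed.

Lemma valgeD (K : fieldType) (ord : K -> int) p q : padic_field ord p q -> forall x y N, valge ord x N -> valge ord y N -> valge ord (x + y) N.
Proof.
move=> HK x y N [->|hx]; first by rewrite add0r.
move=> [->|hy]; first by rewrite addr0; right.
case: (eqVneq x 0) => [->|x0]; first by rewrite add0r; right.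
case: (eqVneq y 0) => [->|y0]; first by rewrite addr0; right.
case: (eqVneq (x + y) 0) => [->|s0]; first by left.
right; apply: le_trans (pf_add HK x0 y0 s0).
by rewrite le_min hx hy.
Qed.

Lemma valgeB (K : fieldType) (ord : K -> int) p q : padic_field ord p q -> forall x y N, valge ord x N -> valge ord y N -> valge ord (x - y) N.
Proof. move=> HK x y N hx hy; apply: (valgeD HK) => //; exact: (valgeN HK). Qed.

Lemma valgeM (K : fieldType) (ord : K -> int) p q : padic_field ord p q -> forall x y N M, valge ord x N -> valge ord y M -> valge ord (x * y) (N + M).
Proof.
move=> HK x y N M [->|hx]; first by rewrite mul0r; left.
move=> [->|hy]; first by rewrite mulr0; left.
case: (eqVneq x 0) => [->|x0]; first by rewrite mul0r; left.
case: (eqVneq y 0) => [->|y0]; first by rewrite mulr0; left.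
by right; rewrite (pf_mul HK) // lerD.
Qed.

Lemma valge1 (K : fieldType) (ord : K -> int) p q : padic_field ord p q -> valge ord 1 0.
Proof. by move=> HK; right; rewrite (ordone HK). Qed.

Lemma valge_nat (K : fieldType) (ord : K -> int) p q : padic_field ord p q -> forall n, valge ord (n%:R) 0.
Proof.
move=> HK; elim=> [|n IH]; first by left.
by rewrite -addn1 natrD; apply: (valgeD HK) => //; apply: valge1 HK.
Qed.

Lemma valgeX (K : fieldType) (ord : K -> int) p q : padic_field ord p q -> forall x n, valge ord x 0 -> valge ord (x ^+ n) 0.
Proof.
move=> HK x n hx; elim: n => [|n IH]; first by rewrite expr0; apply: valge1 HK.
by rewrite exprS -[0]addr0; apply: (valgeM HK).
Qed.

Lemma valge_eq0 (K : fieldType) (ord : K -> int) x : (forall M, valge ord x M) -> x = 0.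
Proof.
move=> h; case: (h (ord x + 1)) => // hl; exfalso; lia.
Qed.

Lemma powdiff (K : fieldType) (ord : K -> int) p q : padic_field ord p q -> forall u v N n,
  valge ord u 0 -> valge ord v 0 -> valge ord (u - v) N -> valge ord (u ^+ n - v ^+ n) N.
Proof.
move=> HK u v N n hu hv huv; elim: n => [|n IH]; first by rewrite !expr0 subrr; left.
have -> : u ^+ n.+1 - v ^+ n.+1 = u * (u ^+ n - v ^+ n) + (u - v) * v ^+ n by rewrite !exprS; ring.
apply: (valgeD HK).
  by rewrite -[N]add0r; apply: (valgeM HK).
by rewrite -[N]addr0; apply: (valgeM HK) => //; apply: (valgeX HK).
Qed.

Lemma powdiff2 (K : fieldType) (ord : K -> int) p q : padic_field ord p q -> forall u v N n,
  valge ord u 0 -> valge ord v 0 -> valge ord (u - v) N -> (0 <= N)%R ->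
  valge ord (u ^+ n - v ^+ n - n%:R * v ^+ n.-1 * (u - v)) (N + N).
Proof.
move=> HK u v N n hu hv huv hN; elim: n => [|n IH]; first by rewrite !expr0 subrr mul0r mul0r subr0; left.
have -> : u ^+ n.+1 - v ^+ n.+1 - n.+1%:R * v ^+ n.+1.-1 * (u - v) =
   u * (u ^+ n - v ^+ n - n%:R * v ^+ n.-1 * (u - v)) + n%:R * v ^+ n.-1 * ((u - v) * (u - v)).
  case: n {IH} => [|n]; rewrite /= ?expr0 ?exprS; first by rewrite mulr1n; ring.
  rewrite -[n.+2]addn1 natrD; ring.
apply: (valgeD HK).
  by rewrite -[N + N]add0r; apply: (valgeM HK).
rewrite -[N + N]add0r; apply: (valgeM HK); last by apply: (valgeM HK).
by rewrite -[0]addr0; apply: (valgeM HK); [apply: (valge_nat HK)|apply: (valgeX HK)].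
Qed.
Lemma ordV (K : fieldType) (ord : K -> int) p q : padic_field ord p q -> forall x, x != 0 -> ord (x^-1) = - ord x.
Proof.
move=> HK x hx; have := pf_mul HK hx (invr_neq0 hx); rewrite mulfV // (ordone HK).
move=> h; lia.
Qed.

Fixpoint hseq (K : fieldType) (l : nat) (a : K) (n : nat) : K :=
  match n with 0 => 1 | n'.+1 => let y := hseq l a n' in y + (a - y ^+ l) / l%:R end.

Lemma hseq_inv (K : fieldType) (ord : K -> int) p q : padic_field ord p q -> forall (l : nat) (a : K),
  l%:R != 0 :> K -> ord (l%:R) = 0 -> valge ord (a - 1) 1 -> forall n,
  valge ord (hseq l a n - 1) 1 /\ valge ord (hseq l a n ^+ l - a) (n%:Z + 1) /\
  valge ord (hseq l a n.+1 - hseq l a n) (n%:Z + 1).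
Proof.
move=> HK l a l0 ordl ha.
have hli : valge ord (l%:R^-1 : K) 0 by right; rewrite (ordV HK) // ordl oppr0.
have step : forall y : K, forall n : nat, valge ord (y - 1) 1 -> valge ord (y ^+ l - a) (n%:Z + 1) ->
  valge ord ((a - y ^+ l) / l%:R) (n%:Z + 1).
  move=> y n _ h; rewrite -[_ + 1]addr0; apply: (valgeM HK) => //.
  by rewrite -opprB; apply: (valgeN HK).
have hO : forall y : K, valge ord (y - 1) 1 -> valge ord y 0.
  move=> y h; have -> : y = (y - 1) + 1 by rewrite subrK.
  by apply: (valgeD HK); [apply: valgeW h|apply: (valge1 HK)].
elim=> [|n [IH1 [IH2 IH3]]].
  have h2 : valge ord (1 ^+ l - a) (0%:Z + 1) by rewrite expr1n -opprB add0r; apply: (valgeN HK).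
  split; first by rewrite /= subrr; left.
  split; first by [].
  have -> : hseq l a 1 - hseq l a 0 = (a - 1 ^+ l) / l%:R by rewrite /=; ring.
  by apply: step => //; rewrite subrr; left.
set y := hseq l a n in IH1 IH2 IH3 *.
set h := (a - y ^+ l) / l%:R.
have hh : valge ord h (n%:Z + 1) by apply: step.
have -> : hseq l a n.+1 = y + h by [].
have y1 : valge ord (y + h - 1) 1.
  have -> : y + h - 1 = (y - 1) + h by ring.
  apply: (valgeD HK) => //; apply: valgeW hh; lia.
have Y2 : valge ord ((y + h) ^+ l - a) (n.+1%:Z + 1).
  have lh : l%:R * h = a - y ^+ l by rewrite /h mulrC divfK.
  have -> : (y + h) ^+ l - a = (y ^+ l - a) * (- (y ^+ l.-1 - 1 ^+ l.-1)) +
      ((y + h) ^+ l - y ^+ l - l%:R * y ^+ l.-1 * (y + h - y)).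
    have -> : a = y ^+ l + l%:R * h by rewrite lh; ring.
    rewrite expr1n; ring.
  apply: (valgeD HK).
    have -> : (n.+1%:Z + 1) = (n%:Z + 1) + 1 by lia.
    apply: (valgeM HK) => //; apply: (valgeN HK); apply: (powdiff HK) => //; first exact: hO.
    exact: (valge1 HK).
  have hyh : valge ord (y + h - y) (n%:Z + 1) by have -> : y + h - y = h by ring.
  have D := powdiff2 HK l (hO _ y1) (hO _ IH1) hyh ltac:(lia).
  apply: valgeW D; lia.
split => //; split => //.
have -> : hseq l a n.+2 = (y + h) + (a - (y + h) ^+ l) / l%:R by [].
rewrite addrAC subrr add0r; apply: step => //.
Qed.

Lemma hensel (K : fieldType) (ord : K -> int) p q : padic_field ord p q -> forall (l : nat) (a : K),
  l%:R != 0 :> K -> ord (l%:R) = 0 -> valge ord (a - 1) 1 -> exists w, w ^+ l = a.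
Proof.
move=> HK l a l0 ordl ha.
have I := hseq_inv HK l0 ordl ha.
have cau : forall n m, (n <= m)%N -> valge ord (hseq l a m - hseq l a n) (n%:Z + 1).
  move=> n m /subnK <-; elim: (m - n)%N => [|d IH]; first by rewrite add0n subrr; left.
  have -> : hseq l a (d.+1 + n) - hseq l a n =
     (hseq l a (d + n).+1 - hseq l a (d + n)) + (hseq l a (d + n) - hseq l a n) by rewrite addSn; ring.
  apply: (valgeD HK) => //; apply: valgeW (proj2 (proj2 (I _))); lia.
have [L hL] : exists L, val_converges ord (hseq l a) L.
  apply: (pf_complete HK) => M; exists `|M|%N => m n hm hn.
  case: (leqP n m) => hnm.
    by apply: valgeW (cau _ _ hnm); lia.
  rewrite -opprB; apply: (valgeN HK); apply: valgeW (cau _ _ (ltnW hnm)); lia.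
exists L; apply/eqP; rewrite -subr_eq0; apply/eqP; apply: valge_eq0 => M.
have [N hN] := hL (Num.max M 0).
set n := maxn N `|M|%N.
have hn := hN n (leq_maxl _ _).
have [I1 [I2 _]] := I n.
have yO : valge ord (hseq l a n) 0.
  have -> : hseq l a n = (hseq l a n - 1) + 1 by rewrite subrK.
  by apply: (valgeD HK); [apply: valgeW I1|apply: (valge1 HK)].
have LO : valge ord L 0.
  have -> : L = hseq l a n - (hseq l a n - L) by ring.
  by apply: (valgeB HK) => //; apply: valgeW hn; rewrite le_max lexx orbT.
have -> : L ^+ l - a = (hseq l a n ^+ l - a) - (hseq l a n ^+ l - L ^+ l) by ring.
apply: (valgeB HK).
  apply: valgeW I2; have : (`|M|%N <= n)%N by apply: leq_maxr. lia.
have D := powdiff HK l yO LO hn.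
by apply: valgeW D; rewrite le_max lexx.
Qed.
Lemma ord_strict (K : fieldType) (ord : K -> int) p q : padic_field ord p q -> forall x y : K,
  y != 0 -> x != 0 -> ord y < ord x -> x + y != 0 /\ ord (x + y) = ord y.
Proof.
move=> HK x y y0 x0 hlt.
have s0 : x + y != 0.
  apply/negP => /eqP e; have : x = - y by rewrite -(addrK y x) e sub0r.
  by move=> ex; move: hlt; rewrite ex (ordN HK) // ltxx.
split => //; apply/eqP; rewrite eq_le; apply/andP; split.
  have nx0 : - x != 0 by rewrite oppr_eq0.
  have e : x + y + - x = y by ring.
  have := pf_add HK s0 nx0; rewrite e => /(_ y0).
  rewrite (ordN HK) // ge_min => /orP[//|h]; exfalso.
  by move: (lt_le_trans hlt h); rewrite ltxx.
have := pf_add HK x0 y0 s0; rewrite ge_min => /orP[h|//].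
by apply: le_trans h; apply: ltW.
Qed.

Definition lexp (p : nat) : nat := if p == 2%N then 3%N else 2%N.

Lemma lexp_ok (K : fieldType) (ord : K -> int) p q : padic_field ord p q ->
  (lexp p)%:R != 0 :> K /\ ord ((lexp p)%:R) = 0 /\ (lexp p = 2 \/ lexp p = 3)%N.
Proof.
move=> HK.
have l0 : (lexp p)%:R != 0 :> K by apply: (pf_char0 HK); rewrite /lexp; case: ifP.
split => //; split; last by rewrite /lexp; case: ifP; auto.
have := valge_nat HK (lexp p); case=> [e|h]; first by move: l0; rewrite e eqxx.
apply/eqP; rewrite eq_le h andbT; apply/negP => hgt.
have hl1 : valge ord ((lexp p)%:R : K) 1 by right; lia.
have hp := pf_p HK.
have : valge ord (1 : K) 1.
  rewrite /lexp in hl1; case: (eqVneq p 2%N) hl1 => [e|ne] hl1.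
    have -> : (1 : K) = 3%:R - 2%:R by rewrite -natrB.
    by rewrite e in hp; apply: (valgeB HK).
  have [e2|op] := even_prime (pf_prime HK); first by rewrite e2 eqxx in ne.
  have ep : p = (2 * p./2).+1 by rewrite -{1}(odd_double_half p) op add1n -muln2 mulnC.
  have -> : (1 : K) = p%:R - 2%:R * (p./2)%:R by rewrite -natrM {1}ep -addn1 natrD addrAC subrr add0r.
  have := valgeM HK hl1 (valge_nat HK p./2); rewrite addr0 => h2.
  by apply: (valgeB HK).
case=> [/eqP|]; first by rewrite oner_eq0.
by rewrite (ordone HK).
Qed.

Lemma Odef (K : fieldType) (ord : K -> int) p q (HK : padic_field ord p q) (pi : K) :
  pi != 0 -> ord pi = 1 -> forall z : K,
  valge ord z 0 <-> exists w : K, w ^+ lexp p = 1 + pi * z ^+ lexp p.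
Proof.
move=> pi0 opi z; have [l0 [ol l23]] := lexp_ok HK; split.
  move=> hz; apply: (hensel HK l0 ol).
  have -> : 1 + pi * z ^+ lexp p - 1 = pi * z ^+ lexp p by ring.
  have := valgeM HK (N := 1) (M := 0) (x := pi) (y := z ^+ lexp p); rewrite addr0; apply.
    by right; rewrite opi.
  exact: (valgeX HK).
move=> [w hw]; case: (eqVneq z 0) => [->|z0]; first by left.
right; rewrite leNgt; apply/negP => hneg.
have t0 : pi * z ^+ lexp p != 0 by rewrite mulf_neq0 ?expf_neq0.
have ot : ord (pi * z ^+ lexp p) = 1 + (lexp p)%:Z * ord z by rewrite (pf_mul HK) ?expf_neq0 // opi (ordX HK).
have lt0 : ord (pi * z ^+ lexp p) < ord (1 : K).
  rewrite ot (ordone HK); case: l23 => ->; lia.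
have [s0 os] := ord_strict HK t0 (oner_neq0 K) lt0.
have w0 : w != 0.
  apply/negP => /eqP e; move: s0; rewrite -hw e expr0n.
  by case: l23 => -> /=; rewrite ?mulr0n eqxx.
have := congr1 ord hw; rewrite os ot (ordX HK) //.
case: l23 => ->; lia.
Qed.
Lemma q_ge2 (K : fieldType) (ord : K -> int) p q : padic_field ord p q -> (2 <= q)%N.
Proof.
move=> HK; have [s [_ _ hdis hall]] := pf_residue HK.
have [i iq hi] := hall 0 (valge0 _ _).
have [j jq hj] := hall 1 (valge1 HK).
rewrite leqNgt; apply/negP => hq.
have ij : j = i by lia.
rewrite ij in hj.
have : valge ord (1 : K) 1.
  have -> : (1 : K) = (1 - nth 0 s i) - (0 - nth 0 s i) by ring.
  exact: (valgeB HK).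
case=> [/eqP|]; first by rewrite oner_eq0.
by rewrite (ordone HK).
Qed.

Lemma absK_nz (K : fieldType) (ord : K -> int) (R : realType) q x : x != 0 ->
  absK ord R q x = (q%:R : R) ^ (- ord x).
Proof. by move=> hx; rewrite /absK (negbTE hx). Qed.

Lemma absK0 (K : fieldType) (ord : K -> int) (R : realType) q : absK ord R q 0 = 0.
Proof. by rewrite /absK eqxx. Qed.

Lemma qgt1 (K : fieldType) (ord : K -> int) p q : padic_field ord p q -> forall R : realType, 1 < (q%:R : R).
Proof. move=> HK R; have := q_ge2 HK; rewrite ltr1n; lia. Qed.

Lemma absK_ge0 (K : fieldType) (ord : K -> int) p q : padic_field ord p q -> forall (R : realType) x, 0 <= absK ord R q x.
Proof.
move=> HK R x; rewrite /absK; case: ifP => // _; apply: ltW; apply: exprz_gt0.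
by apply: lt_trans (qgt1 HK R).
Qed.

Lemma absK_eq0 (K : fieldType) (ord : K -> int) p q : padic_field ord p q -> forall (R : realType) x, absK ord R q x = 0 -> x = 0.
Proof.
move=> HK R x; rewrite /absK; case: (eqVneq x 0) => // _ h; exfalso.
have : 0 < (q%:R : R) ^ (- ord x) by apply: exprz_gt0; apply: lt_trans (qgt1 HK R).
by rewrite h ltxx.
Qed.

Lemma absK_le (K : fieldType) (ord : K -> int) p q : padic_field ord p q -> forall (R : realType) s t,
  absK ord R q s <= absK ord R q t <-> (s = 0 \/ (t != 0 /\ ord t <= ord s)).
Proof.
move=> HK R s t; split.
  case: (eqVneq s 0) => [->|s0]; first by left.
  case: (eqVneq t 0) => [->|t0].
    rewrite absK0 => h; exfalso.
    have e : absK ord R q s = 0 by apply/eqP; rewrite eq_le h (absK_ge0 HK).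
    by move: s0; rewrite (absK_eq0 HK e) eqxx.
  by rewrite !absK_nz // ler_eXz2l ?(qgt1 HK) // lerN2 => h; right.
case=> [->|[t0 h]]; first by rewrite absK0 (absK_ge0 HK).
case: (eqVneq s 0) => [->|s0]; first by rewrite absK0 (absK_ge0 HK).
by rewrite !absK_nz // ler_eXz2l ?(qgt1 HK) // lerN2.
Qed.

Lemma absK_leO (K : fieldType) (ord : K -> int) p q : padic_field ord p q -> forall (R : realType) s t,
  absK ord R q s <= absK ord R q t <-> exists z, valge ord z 0 /\ s = z * t.
Proof.
move=> HK R s t; rewrite (absK_le HK); split.
  case=> [->|[t0 h]]; first by exists 0; rewrite mul0r; split => //; left.
  case: (eqVneq s 0) => [->|s0]; first by exists 0; rewrite mul0r; split => //; left.
  exists (s / t); split; last by rewrite divfK.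
  right; rewrite (pf_mul HK) ?invr_neq0 // (ordV HK) //; lia.
move=> [z [hz ->]]; case: (eqVneq z 0) => [->|z0]; first by left; rewrite mul0r.
case: (eqVneq t 0) => [->|t0]; first by left; rewrite mulr0.
right; split => //; rewrite (pf_mul HK) //; case: hz => [e|hz]; first by rewrite e eqxx in z0.
lia.
Qed.

Lemma absKN (K : fieldType) (ord : K -> int) p q : padic_field ord p q -> forall (R : realType) x,
  absK ord R q (- x) = absK ord R q x.
Proof.
move=> HK R x; case: (eqVneq x 0) => [->|x0]; first by rewrite oppr0.
by rewrite !absK_nz ?oppr_eq0 // (ordN HK).
Qed.

Lemma absKD (K : fieldType) (ord : K -> int) p q : padic_field ord p q -> forall (R : realType) x y c,
  absK ord R q x <= c -> absK ord R q y <= c -> absK ord R q (x + y) <= c.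
Proof.
move=> HK R x y c hx hy.
case: (eqVneq x 0) => [->|x0]; first by rewrite add0r.
case: (eqVneq y 0) => [->|y0]; first by rewrite addr0.
case: (eqVneq (x + y) 0) => [->|s0]; first by rewrite absK0; apply: le_trans hx; apply: (absK_ge0 HK).
have hm := pf_add HK x0 y0 s0.
case: (lerP (ord x) (ord y)) => hxy.
  apply: le_trans hx; apply/(absK_le HK); right; split => //.
  by apply: le_trans hm; rewrite le_min lexx hxy.
apply: le_trans hy; apply/(absK_le HK); right; split => //.
by apply: le_trans hm; rewrite le_min lexx ltW.
Qed.
Lemma normv_ge0 (K : fieldType) (ord : K -> int) p q : padic_field ord p q -> forall (R : realType) r (v : 'rV[K]_r),
  0 <= normv ord R q v.
Proof. by move=> HK R r v; rewrite /normv bigmax_ge_id. Qed.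

Lemma normv_le (K : fieldType) (ord : K -> int) p q : padic_field ord p q -> forall (R : realType) r (v : 'rV[K]_r) c,
  normv ord R q v <= c <-> 0 <= c /\ forall i, absK ord R q (v ord0 i) <= c.
Proof.
move=> HK R r v c; rewrite /normv; split.
  by move/bigmax_leP => [h1 h2]; split => // i; apply: h2.
by move=> [h1 h2]; apply/bigmax_leP; split => // i _; apply: h2.
Qed.

Lemma absK_le_normv (K : fieldType) (ord : K -> int) (R : realType) q r (v : 'rV[K]_r) i :
  absK ord R q (v ord0 i) <= normv ord R q v.
Proof. by rewrite /normv; apply: le_bigmax. Qed.

Lemma normv_att (K : fieldType) (ord : K -> int) (R : realType) q r (v : 'rV[K]_r) :
  normv ord R q v = 0 \/ exists i, normv ord R q v = absK ord R q (v ord0 i).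
Proof.
rewrite /normv; apply: (big_ind (fun m => m = 0 \/ exists i, m = absK ord R q (v ord0 i))).
- by left.
- move=> x y hx hy; rewrite /Num.max; case: ifP => _; [exact: hy|exact: hx].
- by move=> i _; right; exists i.
Qed.

Lemma normvD (K : fieldType) (ord : K -> int) p q : padic_field ord p q -> forall (R : realType) r (u w : 'rV[K]_r) c,
  normv ord R q u <= c -> normv ord R q w <= c -> normv ord R q (u + w) <= c.
Proof.
move=> HK R r u w c /(normv_le HK) [c0 hu] /(normv_le HK) [_ hw]; apply/(normv_le HK); split => // i.
by rewrite mxE; apply: (absKD HK).
Qed.

Lemma normvN (K : fieldType) (ord : K -> int) p q : padic_field ord p q -> forall (R : realType) r (u : 'rV[K]_r),
  normv ord R q (- u) = normv ord R q u.
Proof.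
move=> HK R r u; rewrite /normv; apply: eq_bigr => i _; by rewrite mxE (absKN HK).
Qed.

Lemma normv_eq0 (K : fieldType) (ord : K -> int) p q : padic_field ord p q -> forall (R : realType) r (u : 'rV[K]_r),
  normv ord R q u <= 0 -> u = 0.
Proof.
move=> HK R r u /(normv_le HK) [_ h]; apply/matrixP => a i; rewrite mxE; have -> : a = ord0 by apply/val_inj; case: a => [[|//] ?].
have := @absK_eq0 _ ord p q HK R (u ord0 i); apply.
by apply/eqP; rewrite eq_le h (absK_ge0 HK).
Qed.

Lemma normv_char (K : fieldType) (ord : K -> int) p q : padic_field ord p q -> forall (R : realType) r (u v : 'rV[K]_r),
  normv ord R q u <= normv ord R q v <->
  forall i, u ord0 i = 0 \/ exists j, exists z, valge ord z 0 /\ u ord0 i = z * v ord0 j.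
Proof.
move=> HK R r u v; rewrite (normv_le HK); split.
  move=> [_ h] i; case: (normv_att ord R q v) => [e|[j e]].
    left; have := h i; rewrite e => h0; have := @absK_eq0 _ ord p q HK R (u ord0 i); apply.
    by apply/eqP; rewrite eq_le h0 (absK_ge0 HK).
  by right; exists j; apply/(absK_leO HK R); rewrite -e.
move=> h; split; first exact: (normv_ge0 HK).
move=> i; case: (h i) => [->|[j hj]]; first by rewrite absK0 (normv_ge0 HK).
by apply: le_trans (absK_le_normv ord R q v j); apply/(absK_leO HK).
Qed.
Fixpoint trename (K : fieldType) (s : nat -> nat) (t : term K) : term K :=
  match t with
  | TVar i => TVar K (s i)
  | TConst c => TConst c
  | TAdd a b => TAdd (trename s a) (trename s b)
  | TMul a b => TMul (trename s a) (trename s b)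
  | TFn n F ts => TFn F (fun i => trename s (ts i))
  end.

Fixpoint frename (K : fieldType) (s : nat -> nat) (phi : formula K) : formula K :=
  match phi with
  | FEq a b => FEq (trename s a) (trename s b)
  | FNot f => FNot (frename s f)
  | FAnd f g => FAnd (frename s f) (frename s g)
  | FEx i f => FEx (s i) (frename s f)
  end.

Lemma teval_rename (K : fieldType) (s : nat -> nat) (e : nat -> K) t :
  teval e (trename s t) = teval (fun j => e (s j)) t.
Proof.
elim: t => //= [a ha b hb|a ha b hb|n F ts IH]; rewrite ?ha ?hb //.
by congr F; apply: functional_extensionality => i; apply: IH.
Qed.

Lemma tadm_rename (K : fieldType) (ord : K -> int) an (s : nat -> nat) t :
  tadm ord an t -> tadm ord an (trename s t).
Proof.
elim: t => //= [a ha b hb|a ha b hb|n F ts IH] => [[]|[]|[hF hts]]; auto.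
Qed.

Lemma holds_rename (K : fieldType) (s : nat -> nat) (hs : injective s) phi :
  forall e : nat -> K, holds e (frename s phi) <-> holds (fun j => e (s j)) phi.
Proof.
elim: phi => [a b|f IH|f IHf g IHg|i f IH] e /=.
- by rewrite !teval_rename.
- by rewrite IH.
- by rewrite IHf IHg.
- split => -[y hy]; exists y; move: hy; rewrite IH;
  have -> : (fun j => upd e (s i) y (s j)) = upd (fun j => e (s j)) i y
    by apply: functional_extensionality => j; rewrite /upd (inj_eq hs).
  all: by [].
Qed.

Lemma fadm_rename (K : fieldType) (ord : K -> int) an (s : nat -> nat) phi :
  fadm ord an phi -> fadm ord an (frename s phi).
Proof.
elim: phi => /= [a b [] ? ?|f IH|f IHf g IHg [] ? ?|i f IH]; auto; split; exact: tadm_rename.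
Qed.

Fixpoint exblock (K : fieldType) (o n : nat) (phi : formula K) : formula K :=
  match n with 0 => phi | n'.+1 => FEx o (exblock o.+1 n' phi) end.

Definition setb (K : fieldType) (e : nat -> K) (o n : nat) (g : nat -> K) : nat -> K :=
  fun j => if (o <= j < o + n)%N then g (j - o)%N else e j.

Lemma fadm_exblock (K : fieldType) (ord : K -> int) an o n (phi : formula K) :
  fadm ord an phi -> fadm ord an (exblock o n phi).
Proof. by elim: n o => //= n IH o h; apply: IH. Qed.

Lemma holds_exblock (K : fieldType) n (phi : formula K) : forall o e,
  holds e (exblock o n phi) <-> exists g, holds (setb e o n g) phi.
Proof.
elim: n => [|n IH] o e /=.
  have E : forall g, setb e o 0 g = e.
    by move=> g; apply: functional_extensionality => j; rewrite /setb addn0; case: leqP => //= h; rewrite ltnNge h.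
  by split => [h|[g]]; [exists (fun _ => 0); rewrite E|rewrite E].
split.
  move=> [y /IH [g hg]]; exists (fun m => if m is m'.+1 then g m' else y).
  suff -> : setb e o n.+1 (fun m => if m is m'.+1 then g m' else y) = setb (upd e o y) o.+1 n g by [].
  apply: functional_extensionality => j; rewrite /setb /upd.
  case: ifP => h1; case: ifP => h2; try case: eqP => h3; try (exfalso; lia).
  - by have -> : (j - o = (j - o.+1).+1)%N by lia.
  - by subst j; rewrite subnn.
  - by [].
move=> [g hg]; exists (g 0%N); apply/IH; exists (fun m => g m.+1).
suff <- : setb e o n.+1 g = setb (upd e o (g 0%N)) o.+1 n (fun m => g m.+1) by [].
apply: functional_extensionality => j; rewrite /setb /upd.
case: ifP => h1; case: ifP => h2; try case: eqP => h3; try (exfalso; lia).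
- by have -> : (j - o = (j - o.+1).+1)%N by lia.
- by subst j; rewrite subnn.
- by [].
Qed.

Definition allblock (K : fieldType) (o n : nat) (phi : formula K) : formula K :=
  FNot (exblock o n (FNot phi)).

Lemma holds_allblock (K : fieldType) n (phi : formula K) o e :
  holds e (allblock o n phi) <-> forall g, holds (setb e o n g) phi.
Proof.
rewrite /allblock /= holds_exblock; split.
  by move=> h g; apply: NNPP => hn; apply: h; exists g.
by move=> h [g hg]; apply: hg; apply: h.
Qed.

Definition Ftrue (K : fieldType) : formula K := FEq (TConst (0 : K)) (TConst 0).
Definition FOr (K : fieldType) (a b : formula K) := FNot (FAnd (FNot a) (FNot b)).
Definition FImp (K : fieldType) (a b : formula K) := FNot (FAnd a (FNot b)).

Lemma holds_FOr (K : fieldType) (e : nat -> K) a b : holds e (FOr a b) <-> holds e a \/ holds e b.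
Proof. rewrite /FOr /=; split; [move=> h; apply: NNPP => hn; apply: h; split => ?; apply: hn; auto|by move=> [?|?] []]. Qed.

Lemma holds_FImp (K : fieldType) (e : nat -> K) a b : holds e (FImp a b) <-> (holds e a -> holds e b).
Proof. rewrite /FImp /=; split; [move=> h ha; apply: NNPP => hn; apply: h; split|move=> h [ha hb]; apply: hb; apply: h]; done. Qed.

Definition fandl (K : fieldType) (T : Type) (s : seq T) (F : T -> formula K) : formula K :=
  foldr (fun x acc => FAnd (F x) acc) (Ftrue K) s.

Lemma holds_fandl (K : fieldType) (T : eqType) (s : seq T) (F : T -> formula K) e :
  holds e (fandl s F) <-> forall x, x \in s -> holds e (F x).
Proof.
elim: s => [|x s IH] /=; first by split => // _ x; rewrite in_nil.
rewrite IH; split.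
  by move=> [hx hs] y; rewrite in_cons => /orP[/eqP->|]; auto.
by move=> h; split; [apply: h; rewrite in_cons eqxx|move=> y hy; apply: h; rewrite in_cons hy orbT].
Qed.

Lemma fadm_fandl (K : fieldType) (ord : K -> int) an (T : Type) (s : seq T) (F : T -> formula K) :
  (forall x, fadm ord an (F x)) -> fadm ord an (fandl s F).
Proof. by move=> h; elim: s => //= x s IH; split. Qed.

Definition forl (K : fieldType) (T : Type) (s : seq T) (F : T -> formula K) : formula K :=
  FNot (fandl s (fun x => FNot (F x))).

Lemma holds_forl (K : fieldType) (T : eqType) (s : seq T) (F : T -> formula K) e :
  holds e (forl s F) <-> exists x, x \in s /\ holds e (F x).
Proof.
rewrite /forl /= holds_fandl; split.
  by move=> h; apply: NNPP => hn; apply: h => x hx hF; apply: hn; exists x.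
by move=> [x [hx hF]] h; apply: (h x hx).
Qed.

Lemma fadm_forl (K : fieldType) (ord : K -> int) an (T : Type) (s : seq T) (F : T -> formula K) :
  (forall x, fadm ord an (F x)) -> fadm ord an (forl s F).
Proof. by move=> h; apply: fadm_fandl. Qed.
Lemma env_of_lt (K : fieldType) r (x : 'rV[K]_r) m (h : (m < r)%N) : env_of x m = x ord0 (Ordinal h).
Proof. by rewrite /env_of insubT. Qed.

Lemma env_of_ge (K : fieldType) r (x : 'rV[K]_r) m : (r <= m)%N -> env_of x m = 0.
Proof. by move=> h; rewrite /env_of insubF //= ltnNge h. Qed.

Lemma row_env (K : fieldType) r (b : 'rV[K]_r) : \row_(m < r) env_of b m = b.
Proof.
apply/matrixP => a m; rewrite mxE; have -> : a = ord0 by apply/val_inj; case: a => [[|//] ?].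
by rewrite (env_of_lt _ (ltn_ord m)); congr (b ord0 _); apply: val_inj.
Qed.

Fixpoint tpow (K : fieldType) (n : nat) (t : term K) : term K :=
  match n with 0 => TConst 1 | n'.+1 => TMul t (tpow n' t) end.

Lemma teval_tpow (K : fieldType) (e : nat -> K) n t : teval e (tpow n t) = teval e t ^+ n.
Proof. by elim: n => //= n ->; rewrite exprS. Qed.

Lemma tadm_tpow (K : fieldType) (ord : K -> int) an n (t : term K) : tadm ord an t -> tadm ord an (tpow n t).
Proof. by move=> h; elim: n => //= n IH; split. Qed.

Definition Bo (r : nat) := r.+1.
Definition Ao (r : nat) := (r.+1 + r)%N.
Definition Zo (r : nat) := (r.+1 + r + r)%N.
Definition Wo (r : nat) := (Zo r).+1.
Definition sig (o r m : nat) := if (m < r)%N then (o + m)%N else (m + (Zo r).+2)%N.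

Definition sterm (K : fieldType) (o m : nat) : term K :=
  TAdd (TVar K m) (TMul (TConst (-1)) (TVar K (o + m))).

Definition AbsLe (K : fieldType) (l : nat) (pi : K) r (s t : term K) : formula K :=
  FEx (Zo r) (FAnd (FEx (Wo r) (FEq (tpow l (TVar K (Wo r)))
       (TAdd (TConst 1) (TMul (TConst pi) (tpow l (TVar K (Zo r)))))))
    (FEq s (TMul (TVar K (Zo r)) t))).

Definition NLform (K : fieldType) (l : nat) (pi : K) r : formula K :=
  fandl (enum 'I_r) (fun m : 'I_r => FOr (FEq (sterm K (Ao r) m) (TConst 0))
     (forl (enum 'I_r) (fun m' : 'I_r => AbsLe l pi r (sterm K (Ao r) m) (sterm K (Bo r) m')))).

Definition Geform (K : fieldType) (l : nat) (pi : K) r (psii psij : formula K) : formula K :=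
  allblock (Bo r) r (FImp (frename (sig (Bo r) r) psij)
    (exblock (Ao r) r (FAnd (frename (sig (Ao r) r) psii) (NLform l pi r)))).

Definition Cform (K : fieldType) k (l : nat) (pi : K) r (psi : 'I_k -> formula K) (i : 'I_k) : formula K :=
  fandl (enum 'I_k) (fun j => Geform l pi r (psi i) (psi j)).

Definition Phi (K : fieldType) k (l : nat) (pi : K) r (psi phi : 'I_k -> formula K) : formula K :=
  forl (enum 'I_k) (fun i => FAnd (Cform l pi r psi i)
    (FAnd (fandl [seq i' : 'I_k <- enum 'I_k | (i' < i)%N] (fun i' => FNot (Cform l pi r psi i'))) (phi i))).

Lemma sig_inj o r : (o + r <= (Zo r).+2)%N -> injective (sig o r).
Proof. move=> ho a b; rewrite /sig; case: ifP => ha; case: ifP => hb; lia. Qed.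

Lemma fadm_Phi (K : fieldType) (ord : K -> int) an k l (pi : K) r (psi phi : 'I_k -> formula K) :
  (forall i, fadm ord an (psi i)) -> (forall i, fadm ord an (phi i)) ->
  fadm ord an (Phi l pi r psi phi).
Proof.
move=> hpsi hphi.
have hC : forall i, fadm ord an (Cform l pi r psi i).
  move=> i; apply: fadm_fandl => j; rewrite /Geform /allblock /=.
  apply: fadm_exblock => /=; split; first exact: fadm_rename.
  apply: fadm_exblock; split; first exact: fadm_rename.
  apply: fadm_fandl => m /=; split; first by split.
  apply: fadm_fandl => m' /=; split.
    by split; [apply: tadm_tpow|split => //; split => //; apply: tadm_tpow].
  by repeat split.
apply: fadm_forl => i /=; split => //; split => //; apply: fadm_fandl => i' /=; exact: hC.
Qed.


Definition E1 (K : fieldType) r (x : 'rV[K]_r) (y : K) (g : nat -> K) :=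
  setb (upd (env_of x) r y) (Bo r) r g.
Definition E2 (K : fieldType) r (x : 'rV[K]_r) (y : K) (g h : nat -> K) :=
  setb (E1 x y g) (Ao r) r h.

Ltac envsimp := rewrite /E2 /E1 /setb /upd /Ao /Bo /Zo /Wo /sig.

Lemma E2_x (K : fieldType) r (x : 'rV[K]_r) y g h m : (m < r)%N -> E2 x y g h m = env_of x m.
Proof. by move=> hm; envsimp; repeat (case: ifP => ?; try lia). Qed.

Lemma E2_A (K : fieldType) r (x : 'rV[K]_r) y g h m : (m < r)%N -> E2 x y g h (Ao r + m) = h m.
Proof. move=> hm; envsimp; case: ifP => ?; try lia; congr h; lia. Qed.

Lemma E2_B (K : fieldType) r (x : 'rV[K]_r) y g h m : (m < r)%N -> E2 x y g h (Bo r + m) = g m.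
Proof. move=> hm; envsimp; repeat (case: ifP => ?; try lia); congr g; lia. Qed.

Lemma E1_sig (K : fieldType) r (x : 'rV[K]_r) y g :
  (fun m => E1 x y g (sig (Bo r) r m)) = env_of (\row_(m < r) g m).
Proof.
apply: functional_extensionality => m; case: (ltnP m r) => hm.
  rewrite (env_of_lt _ hm) mxE /= /sig hm; envsimp; repeat (case: ifP => ?; try lia); congr g; lia.
rewrite env_of_ge //; have hm' : (m < r)%N = false by rewrite ltnNge hm.
rewrite /sig hm'; envsimp; repeat (case: ifP => ?; try lia).
rewrite env_of_ge //; lia.
Qed.

Lemma E2_sig (K : fieldType) r (x : 'rV[K]_r) y g h :
  (fun m => E2 x y g h (sig (Ao r) r m)) = env_of (\row_(m < r) h m).
Proof.
apply: functional_extensionality => m; case: (ltnP m r) => hm.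
  rewrite (env_of_lt _ hm) mxE /= /sig hm; envsimp; repeat (case: ifP => ?; try lia); congr h; lia.
rewrite env_of_ge //; have hm' : (m < r)%N = false by rewrite ltnNge hm.
rewrite /sig hm'; envsimp; repeat (case: ifP => ?; try lia).
rewrite env_of_ge //; lia.
Qed.
Definition gep (K : fieldType) (ord : K -> int) (R : realType) q r k (Xs : 'I_k -> 'rV[K]_r -> Prop)
  (x : 'rV[K]_r) (i j : 'I_k) : Prop :=
  forall b, Xs j b -> exists a, Xs i a /\ normv ord R q (x - a) <= normv ord R q (x - b).

Definition Cp (K : fieldType) (ord : K -> int) (R : realType) q r k (Xs : 'I_k -> 'rV[K]_r -> Prop)
  (x : 'rV[K]_r) (i : 'I_k) : Prop := forall j, gep ord R q Xs x i j.

Lemma holds_AbsLe (K : fieldType) (l : nat) (pi : K) r (s t : term K) E :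
  holds E (AbsLe l pi r s t) <-> exists z, (exists w, w ^+ l = 1 + pi * z ^+ l) /\
     teval (upd E (Zo r) z) s = z * teval (upd E (Zo r) z) t.
Proof.
rewrite /AbsLe /=; have hZW : (Zo r == Wo r) = false by rewrite /Wo; lia.
have hWZ : (Wo r == Zo r) = false by rewrite /Wo; lia.
have e1 : forall z w, teval (upd (upd E (Zo r) z) (Wo r) w) (tpow l (TVar K (Wo r))) = w ^+ l.
  by move=> z w; rewrite teval_tpow /= /upd eqxx.
have e2 : forall z w, teval (upd (upd E (Zo r) z) (Wo r) w) (tpow l (TVar K (Zo r))) = z ^+ l.
  by move=> z w; rewrite teval_tpow /= /upd hZW eqxx.
have e3 : forall z, upd E (Zo r) z (Zo r) = z by move=> z; rewrite /upd eqxx.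
split => -[z [[w hw] hst]]; exists z; (split; [exists w|]).
- by move: hw; rewrite e1 e2.
- by move: hst; rewrite e3.
- by rewrite e1 e2.
- by rewrite e3.
Qed.

Lemma teval_sterm (K : fieldType) r (x : 'rV[K]_r) y g h (m : 'I_r) z :
  teval (upd (E2 x y g h) (Zo r) z) (sterm K (Ao r) m) = (x - \row_(j < r) h j) ord0 m /\
  teval (upd (E2 x y g h) (Zo r) z) (sterm K (Bo r) m) = (x - \row_(j < r) g j) ord0 m /\
  teval (E2 x y g h) (sterm K (Ao r) m) = (x - \row_(j < r) h j) ord0 m.
Proof.
have hm := ltn_ord m.
have e1 : (nat_of_ord m == Zo r)%N = false by rewrite /Zo; lia.
have e2 : (Ao r + m == Zo r)%N = false by rewrite /Zo /Ao; lia.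
have e3 : (Bo r + m == Zo r)%N = false by rewrite /Zo /Bo; lia.
rewrite /sterm /= /upd e1 e2 e3 !mxE E2_x // E2_A // E2_B // (env_of_lt _ hm).
have -> : Ordinal hm = m by apply: val_inj.
by split; [|split]; ring.
Qed.

Lemma holds_NL (K : fieldType) (ord : K -> int) p q (HK : padic_field ord p q) (R : realType) (pi : K) :
  (forall z : K, valge ord z 0 <-> exists w : K, w ^+ lexp p = 1 + pi * z ^+ lexp p) ->
  forall r (x : 'rV[K]_r) y g h,
  holds (E2 x y g h) (NLform (lexp p) pi r) <->
  normv ord R q (x - \row_(j < r) h j) <= normv ord R q (x - \row_(j < r) g j).
Proof.
move=> hO r x y g h; rewrite (normv_char HK) /NLform holds_fandl; split.
  move=> H m; have := H m (mem_enum _ m); rewrite holds_FOr => -[|].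
    by move=> e; left; rewrite -(proj2 (proj2 (teval_sterm x y g h m 0))); exact: e.
  rewrite holds_forl => -[m' [_ /holds_AbsLe [z [hz hst]]]]; right; exists m', z; split; first by apply/hO.
  by move: hst; rewrite (proj1 (teval_sterm x y g h m z)) (proj1 (proj2 (teval_sterm x y g h m' z))).
move=> H m _; rewrite holds_FOr; case: (H m) => [e|[m' [z [hz e]]]].
  by left; change (teval (E2 x y g h) (sterm K (Ao r) m) = 0); rewrite (proj2 (proj2 (teval_sterm x y g h m 0))) e.
right; rewrite holds_forl; exists m'; split; first exact: mem_enum.
apply/holds_AbsLe; exists z; split; first by apply/hO.
by rewrite (proj1 (teval_sterm x y g h m z)) (proj1 (proj2 (teval_sterm x y g h m' z))).
Qed.

Lemma holds_Ge (K : fieldType) (ord : K -> int) p q (HK : padic_field ord p q) (R : realType) (pi : K) :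
  (forall z : K, valge ord z 0 <-> exists w : K, w ^+ lexp p = 1 + pi * z ^+ lexp p) ->
  forall r k (Xs : 'I_k -> 'rV[K]_r -> Prop) (psi : 'I_k -> formula K),
  (forall i x, Xs i x <-> holds (env_of x) (psi i)) ->
  forall x y i j,
  holds (upd (env_of x) r y) (Geform (lexp p) pi r (psi i) (psi j)) <-> gep ord R q Xs x i j.
Proof.
move=> hO r k Xs psi hpsi x y i j.
have sB := sig_inj (o := Bo r) (r := r) ltac:(rewrite /Bo /Zo; lia).
have sA := sig_inj (o := Ao r) (r := r) ltac:(rewrite /Ao /Zo; lia).
rewrite /Geform holds_allblock; split.
  move=> H b hb; have := H (env_of b); rewrite -/(E1 x y (env_of b)) holds_FImp.
  rewrite holds_rename // E1_sig row_env => /(_ (proj1 (hpsi _ _) hb)).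
  rewrite holds_exblock => -[h /= [h1 h2]].
  exists (\row_(m < r) h m); split.
    by apply/hpsi; move: h1; rewrite holds_rename // -/(E2 x y (env_of b) h) E2_sig.
  move: h2; rewrite -/(E2 x y (env_of b) h) (holds_NL HK R hO) row_env; done.
move=> H g; rewrite -/(E1 x y g) holds_FImp holds_rename // E1_sig => /hpsi hb.
have [a [ha hn]] := H _ hb.
rewrite holds_exblock; exists (env_of a); rewrite /=; split.
  by rewrite holds_rename // -/(E2 x y g (env_of a)) E2_sig row_env; apply/hpsi.
by rewrite -/(E2 x y g (env_of a)) (holds_NL HK R hO) row_env.
Qed.
Lemma gep_total (K : fieldType) (ord : K -> int) (R : realType) q r k (Xs : 'I_k -> 'rV[K]_r -> Prop) x i j :
  gep ord R q Xs x i j \/ gep ord R q Xs x j i.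
Proof.
case: (classic (gep ord R q Xs x i j)) => h; [by left|right].
have [b [hb hlt]] : exists b, Xs j b /\ forall a, Xs i a -> normv ord R q (x - b) < normv ord R q (x - a).
  apply: NNPP => hn; apply: h => b hb; apply: NNPP => hn2; apply: hn; exists b; split => // a ha.
  rewrite ltNge; apply/negP => hle; apply: hn2; by exists a.
move=> a ha; exists b; split => //; apply: ltW; exact: hlt.
Qed.

Lemma gep_trans (K : fieldType) (ord : K -> int) (R : realType) q r k (Xs : 'I_k -> 'rV[K]_r -> Prop) x i j l :
  gep ord R q Xs x i j -> gep ord R q Xs x j l -> gep ord R q Xs x i l.
Proof.
move=> h1 h2 c hc; have [b [hb h3]] := h2 c hc; have [a [ha h4]] := h1 b hb.
by exists a; split => //; apply: le_trans h4 h3.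
Qed.

Lemma exists_Cp (K : fieldType) (ord : K -> int) (R : realType) q r k (Xs : 'I_k -> 'rV[K]_r -> Prop) x :
  (0 < k)%N -> exists i, Cp ord R q Xs x i.
Proof.
move=> hk.
suff H : forall s : seq 'I_k, s != [::] -> exists i, forall j, j \in s -> gep ord R q Xs x i j.
  have [|i hi] := H (enum 'I_k).
    apply/negP => /eqP e; have := mem_enum 'I_k (Ordinal hk); by rewrite e in_nil.
  by exists i => j; apply: hi; rewrite mem_enum.
elim=> [//|a s IH] _; case: (eqVneq s [::]) => [->|ns].
  exists a => j; rewrite in_cons in_nil orbF => /eqP ->.
  by case: (gep_total ord R q Xs x a a).
have [i hi] := IH ns.
case: (gep_total ord R q Xs x i a) => hia.
  by exists i => j; rewrite in_cons => /orP[/eqP ->|]; auto.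
exists a => j; rewrite in_cons => /orP[/eqP ->|hj].
  by case: (gep_total ord R q Xs x a a).
exact: gep_trans hia (hi j hj).
Qed.

Lemma exists_min k (P : 'I_k -> Prop) : (exists i, P i) -> exists i, P i /\ forall i' : 'I_k, (i' < i)%N -> ~ P i'.
Proof.
move=> [i0 h0].
suff H : forall n (i : 'I_k), (i <= n)%N -> P i -> exists i, P i /\ forall i' : 'I_k, (i' < i)%N -> ~ P i'.
  exact: (H i0 i0 (leqnn _) h0).
elim=> [|n IH] i hi Pi.
  exists i; split => // i' hi'; lia.
case: (classic (exists i' : 'I_k, (i' < i)%N /\ P i')) => [[i' [h1 h2]]|hn].
  apply: (IH i') => //; lia.
exists i; split => // i' h1 h2; apply: hn; by exists i'.
Qed.

Definition isI (K : fieldType) (ord : K -> int) (R : realType) q r k (Xs : 'I_k -> 'rV[K]_r -> Prop) x (i : 'I_k) :=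
  Cp ord R q Xs x i /\ forall i' : 'I_k, (i' < i)%N -> ~ Cp ord R q Xs x i'.

Lemma isI_uniq (K : fieldType) (ord : K -> int) (R : realType) q r k (Xs : 'I_k -> 'rV[K]_r -> Prop) x i j :
  isI ord R q Xs x i -> isI ord R q Xs x j -> i = j.
Proof.
move=> [c1 m1] [c2 m2]; apply: val_inj => /=; case: (ltngtP i j) => // h; exfalso.
  exact: (m2 _ h c1).
exact: (m1 _ h c2).
Qed.

Lemma normv_sym (K : fieldType) (ord : K -> int) p q (HK : padic_field ord p q) (R : realType) r (x y : 'rV[K]_r) :
  normv ord R q (x - y) = normv ord R q (y - x).
Proof. by rewrite -opprB (normvN HK). Qed.

Lemma ultra_eq (K : fieldType) (ord : K -> int) p q (HK : padic_field ord p q) (R : realType) r (x y b : 'rV[K]_r) :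
  normv ord R q (x - y) < normv ord R q (x - b) -> normv ord R q (y - b) = normv ord R q (x - b).
Proof.
move=> h; apply/eqP; rewrite eq_le; apply/andP; split.
  have -> : y - b = (y - x) + (x - b) by rewrite addrA subrK.
  apply: (normvD HK) => //; rewrite (normv_sym HK); exact: ltW.
rewrite leNgt; apply/negP => h2.
have : normv ord R q (x - b) <= Num.max (normv ord R q (x - y)) (normv ord R q (y - b)).
  have -> : x - b = (x - y) + (y - b) by rewrite addrA subrK.
  by apply: (normvD HK); rewrite le_max lexx ?orbT.
by rewrite le_max !leNgt h h2.
Qed.

Lemma far_lemma (K : fieldType) (ord : K -> int) p q (HK : padic_field ord p q) (R : realType) r k
  (Xs : 'I_k -> 'rV[K]_r -> Prop) (x y : 'rV[K]_r) i :
  Cp ord R q Xs x i -> (forall a, Xs i a -> normv ord R q (x - y) < normv ord R q (x - a)) ->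
  forall i', isI ord R q Xs x i' <-> isI ord R q Xs y i'.
Proof.
move=> hC hfar.
have hall : forall j b, Xs j b -> normv ord R q (y - b) = normv ord R q (x - b).
  move=> j b hb; apply: (ultra_eq HK); have [a [ha hab]] := hC j b hb.
  exact: lt_le_trans (hfar a ha) hab.
have hg : forall i1 j1, gep ord R q Xs x i1 j1 <-> gep ord R q Xs y i1 j1.
  move=> i1 j1; split => h b hb; have [a [ha hab]] := h b hb; exists a; split => //.
    by rewrite (hall _ _ ha) (hall _ _ hb).
  by rewrite -(hall _ _ ha) -(hall _ _ hb).
have hc : forall i1, Cp ord R q Xs x i1 <-> Cp ord R q Xs y i1.
  by move=> i1; split => h j; apply/hg.
move=> i'; split => -[h1 h2]; split.
- exact: (proj1 (hc i') h1).
- by move=> i'' hi h3; apply: (h2 i'' hi); exact: (proj2 (hc i'') h3).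
- exact: (proj2 (hc i') h1).
- by move=> i'' hi h3; apply: (h2 i'' hi); exact: (proj1 (hc i'') h3).
Qed.
Lemma lip_core (K : fieldType) (ord : K -> int) p q (HK : padic_field ord p q) (R : realType) r k
  (X : 'rV[K]_r -> Prop) (Xs : 'I_k -> 'rV[K]_r -> Prop) (f : 'rV[K]_r -> K) (ft : 'I_k -> 'rV[K]_r -> K)
  (lam : R) (Lam : 'I_k -> R) (LL : R) :
  (forall x, X x <-> exists i, Xs i x) ->
  lipschitz_on ord q X f lam ->
  (forall i, lipschitz_on ord q (fun _ => True) (ft i) (Lam i)) ->
  (forall i x, Xs i x -> ft i x = f x) ->
  0 <= lam -> (forall i, lam <= Lam i) -> (forall i, Lam i <= LL) ->
  forall x y i j, isI ord R q Xs x i -> isI ord R q Xs y j ->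
  absK ord R q (ft i x - ft j y) <= LL * normv ord R q (x - y).
Proof.
move=> hcov hf hft hag hl0 hlL hLL x y i j hi hj.
have L0 : forall i, 0 <= Lam i by move=> i'; apply: le_trans hl0 (hlL i').
have n0 : forall v : 'rV[K]_r, 0 <= normv ord R q v by move=> v; apply: (normv_ge0 HK).
have same : forall i1, absK ord R q (ft i1 x - ft i1 y) <= LL * normv ord R q (x - y).
  move=> i1; apply: le_trans (hft i1 x y I I) _; apply: ler_wpM2r => //.
case: (classic (exists a, Xs i a /\ normv ord R q (x - a) <= normv ord R q (x - y))) => [[a [ha hxa]]|nA]; last first.
  have hfar : forall a, Xs i a -> normv ord R q (x - y) < normv ord R q (x - a).
    by move=> a ha; rewrite ltNge; apply/negP => hle; apply: nA; exists a.
  have hj' : isI ord R q Xs x j by apply/(far_lemma HK (proj1 hi) hfar).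
  by rewrite (isI_uniq hi hj'); apply: same.
case: (classic (exists b, Xs j b /\ normv ord R q (y - b) <= normv ord R q (x - y))) => [[b [hb hyb]]|nB]; last first.
  have hfar : forall b, Xs j b -> normv ord R q (y - x) < normv ord R q (y - b).
    by move=> b hb; rewrite (normv_sym HK) ltNge; apply/negP => hle; apply: nB; exists b.
  have hi' : isI ord R q Xs y i by apply/(far_lemma HK (proj1 hj) hfar).
  by rewrite (isI_uniq hj hi'); apply: same.
have Xa : X a by apply/hcov; exists i.
have Xb : X b by apply/hcov; exists j.
have -> : ft i x - ft j y = (ft i x - ft i a) + ((f a - f b) + (ft j b - ft j y)).
  by rewrite (hag _ _ ha) (hag _ _ hb); ring.
apply: (absKD HK); last apply: (absKD HK).
- apply: le_trans (hft i x a I I) _; apply: ler_pM; [exact: L0|exact: n0|exact: hLL|exact: hxa].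
- apply: le_trans (hf a b Xa Xb) _; apply: ler_pM; [exact: hl0|exact: n0|exact: le_trans (hlL i) (hLL i)|].
  have -> : a - b = - (x - a) + ((x - y) + (y - b)) by rewrite opprB (addrA (x - y)) subrK addrA subrK.
  apply: (normvD HK); first by rewrite (normvN HK).
  by apply: (normvD HK).
- apply: le_trans (hft j b y I I) _; apply: ler_pM; [exact: L0|exact: n0|exact: hLL|].
  by rewrite (normv_sym HK).
Qed.
Unset Implicit Arguments.
Theorem mainTheorem2 (R : realType) (K : fieldType) (ord : K -> int) (p q : nat)
  (HK : padic_field ord p q) (an : bool) (r : nat)
  (X : 'rV[K]_r -> Prop) (lam : R) (f : 'rV[K]_r -> K)
  (k : nat) (Xs : 'I_k -> 'rV[K]_r -> Prop) (Lam : 'I_k -> R)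
  (ft : 'I_k -> 'rV[K]_r -> K) :
  (0 < k)%N ->
  definable_set ord an X ->
  0 < lam ->
  definable_fun ord an X f ->
  lipschitz_on ord q X f lam ->
  (forall x, X x <-> exists i, Xs i x) ->
  (forall i, definable_set ord an (Xs i)) ->
  (forall i, lam <= Lam i) ->
  (forall i, definable_fun ord an (fun _ => True) (ft i)) ->
  (forall i, lipschitz_on ord q (fun _ => True) (ft i) (Lam i)) ->
  (forall i x, Xs i x -> ft i x = f x) ->
  exists F : 'rV[K]_r -> K,
    [/\ definable_fun ord an (fun _ => True) F,
        lipschitz_on ord q (fun _ => True) F (\big[Num.max/0]_(i < k) Lam i) &
        forall x, X x -> F x = f x].
Proof.
move=> hk _ hlam _ hflip hcov hXsdef hLam hftdef hftlip hag.
have [pi [pi0 opi]] := pf_unif HK.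
have hO := Odef HK pi0 opi.
pose psi i := proj1_sig (constructive_indefinite_description _ (hXsdef i)).
have Hpsi : forall i, fadm ord an (psi i) /\ (forall x, Xs i x <-> holds (env_of x) (psi i)).
  by move=> i; exact: (proj2_sig (constructive_indefinite_description _ (hXsdef i))).
pose phi i := proj1_sig (constructive_indefinite_description _ (hftdef i)).
have Hphi : forall i, fadm ord an (phi i) /\ (forall x y, (True /\ y = ft i x) <-> holds (upd (env_of x) r y) (phi i)).
  by move=> i; exact: (proj2_sig (constructive_indefinite_description _ (hftdef i))).
have spec : forall i x, Xs i x <-> holds (env_of x) (psi i) by move=> i x; exact: (proj2 (Hpsi i)).
have exI : forall x, exists i, isI ord R q Xs x i.
  by move=> x; apply: exists_min; apply: exists_Cp.
pose F x := ft (proj1_sig (constructive_indefinite_description _ (exI x))) x.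
have FP : forall x i, isI ord R q Xs x i -> F x = ft i x.
  move=> x i hi; rewrite /F; case: constructive_indefinite_description => j hj /=.
  by rewrite (isI_uniq hj hi).
have hC : forall x y i, holds (upd (env_of x) r y) (Cform (lexp p) pi r psi i) <-> Cp ord R q Xs x i.
  move=> x y i; rewrite /Cform holds_fandl; split.
    by move=> h j; apply/(holds_Ge HK R hO spec x y i j); apply: h; rewrite mem_enum.
  by move=> h j _; apply/(holds_Ge HK R hO spec x y i j); apply: h.
exists F; split.
- exists (Phi (lexp p) pi r psi phi); split.
    by apply: fadm_Phi => i; [exact: (proj1 (Hpsi i))|exact: (proj1 (Hphi i))].
  move=> x y; rewrite /Phi holds_forl; split.
    move=> [_ ->]; have [i hi] := exI x; exists i; split; first by rewrite mem_enum.
    split; first by apply/hC; exact: (proj1 hi).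
    split.
      apply/holds_fandl => i'; rewrite mem_filter => /andP[hlt _] /=.
      by rewrite hC; apply: (proj2 hi).
    by apply/(proj2 (Hphi i)); split => //; rewrite (FP x i hi).
  move=> [i [_ [h1 [h2 h3]]]]; split => //.
  have hi : isI ord R q Xs x i.
    split; first by apply/hC; exact: h1.
    move=> i' hlt hc'; have := proj1 (holds_fandl _ _ _) h2 i'; rewrite mem_filter hlt mem_enum => /(_ isT) /=.
    by apply; apply/hC.
  by have [_ ->] := proj2 (proj2 (Hphi i) x y) h3; rewrite (FP x i hi).
- move=> a b _ _.
  have [ia hia] := exI a; have [ib hib] := exI b.
  rewrite (FP a ia hia) (FP b ib hib).
  apply: (lip_core HK hcov hflip hftlip hag (ltW hlam) hLam _ hia hib).
  by move=> i; apply: le_bigmax.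
- move=> x hx; have [i0 h0] := proj1 (hcov x) hx.
  have [i hi] := exI x; rewrite (FP x i hi).
  have [a [ha hxa]] := proj1 hi i0 x h0.
  rewrite subrr in hxa.
  have e : x - a = 0.
    apply: (normv_eq0 HK (R := R)); apply: le_trans hxa _.
    by apply/(normv_le HK); split => // m; rewrite mxE absK0.
  have -> : x = a by apply/eqP; rewrite -subr_eq0 e.
  exact: hag.
Qed.
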